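(* Let $\mathcal{R}_{\rm SW}$ be the family of all south-west quadrants. For $k=2$ and any $m \geq 2$, we do not have hitting $2$-cliques with respect to $\mathcal{R}_{\rm SW}$; that is, there exists a finite point set $V \subset \mathbb{R}^2$ such that for every collection of pairwise disjoint $2$-element subsets of $V$ some hyperedge of $\mathcal{H}(V,\mathcal{R}_{\rm SW},m)$ contains none of these subsets.
   Context: $\mathcal{R}_{\rm SW} = \{\{(x,y) : x \leq a,\ y \leq b\} : a,b \in \mathbb{R}\}$. For a finite $V \subset \mathbb{R}^2$, $\mathcal{H}(V,\mathcal{R},m)$ is the hypergraph on $V$ whose hyperedges are the sets $V \cap R$, $R \in \mathcal{R}$, of size exactly $m$. For fixed $k,m,\mathcal{R}$ we say we have hitting $k$-cliques if for every finite $V \subset \mathbb{R}^2$ there exist pairwise disjoint $k$-element subsets of $V$ such that every hyperedge of $\mathcal{H}(V,\mathcal{R},m)$ fully contains at least one of them. *)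

(* Defs.v *)
From Stdlib Require Import Reals List.
Import ListNotations.
Open Scope R_scope.

Definition point := (R * R)%type.

Definition in_SW (a b : R) (p : point) : Prop := fst p <= a /\ snd p <= b.

(* A finite point set V is given as a duplicate-free list.
   The set V ∩ R for R = SW(a,b) has exactly m elements iff the number of
   points of V in the quadrant is m.  *)
Definition SW_count (V : list point) (a b : R) : nat :=
  length (filter (fun p => if Rle_dec (fst p) a then
                             if Rle_dec (snd p) b then true else false
                           else false) V).

Definition is_SW_hyperedge (V : list point) (m : nat) (a b : R) : Prop :=
  SW_count V a b = m.

Definition two_subset_of (V : list point) (pq : point * point) : Prop :=
  In (fst pq) V /\ In (snd pq) V /\ fst pq <> snd pq.

Definition same_pair (s t : point * point) : Prop :=
  (fst s = fst t /\ snd s = snd t) \/ (fst s = snd t /\ snd s = fst t).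

Definition disjoint_pairs (s t : point * point) : Prop :=
  fst s <> fst t /\ fst s <> snd t /\ snd s <> fst t /\ snd s <> snd t.

(* A collection of pairwise disjoint 2-element subsets of V, listed by C:
   any two listed subsets are either the same set or disjoint. *)
Definition disjoint_two_subsets (V : list point) (C : list (point * point)) : Prop :=
  (forall s, In s C -> two_subset_of V s) /\
  (forall s t, In s C -> In t C -> same_pair s t \/ disjoint_pairs s t).

(* Main.v *)
Require Import Defs.
From Stdlib Require Import Reals List Lra Lia Classical Bool.
Open Scope bool_scope.
Open Scope R_scope.
Import ListNotations.
Open Scope R_scope.

Fixpoint LL (n : nat) : R := match n with O => 0 | S k => 2 * LL k + 2 end.
Definition fA (L : R) (p : point) : point := (fst p + 1, snd p + L + 2).
Definition fB (L : R) (p : point) : point := (fst p + L + 2, snd p + 1).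
Definition gA (L : R) (p : point) : point := (fst p - 1, snd p - L - 2).
Definition gB (L : R) (p : point) : point := (fst p - L - 2, snd p - 1).
Definition o : point := (0, 0).

Fixpoint VV (n : nat) : list point := match n with
  | O => [o]
  | S k => o :: map (fA (LL k)) (VV k) ++ map (fB (LL k)) (VV k) end.

Lemma LL_ge0 n : 0 <= LL n.
Proof. induction n; simpl; lra. Qed.

Lemma VV_bounds n p : In p (VV n) -> 0 <= fst p <= LL n /\ 0 <= snd p <= LL n.
Proof.
  revert p; induction n; intros p H; simpl in H.
  - destruct H as [<-|[]]; simpl; lra.
  - pose proof (LL_ge0 n). simpl.
    destruct H as [<-|H]; [simpl; lra|].
    apply in_app_iff in H; destruct H as [H|H]; apply in_map_iff in H;
      destruct H as [q [<- Hq]]; apply IHn in Hq; simpl; lra.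
Qed.

Lemma count_cons_in a b p l : in_SW a b p -> SW_count (p :: l) a b = S (SW_count l a b).
Proof.
  intros [H1 H2]; unfold SW_count; simpl.
  destruct (Rle_dec (fst p) a); [|lra]. destruct (Rle_dec (snd p) b); [|lra]. reflexivity.
Qed.

Lemma count_app l1 l2 a b : SW_count (l1 ++ l2) a b = (SW_count l1 a b + SW_count l2 a b)%nat.
Proof. unfold SW_count; rewrite filter_app, length_app; reflexivity. Qed.

Lemma count_map (l : list point) g a b a' b' :
  (forall p, In p l -> (in_SW a b (g p) <-> in_SW a' b' p)) ->
  SW_count (map g l) a b = SW_count l a' b'.
Proof.
  induction l as [|p l IH]; intros H; [reflexivity|].
  assert (IH' : SW_count (map g l) a b = SW_count l a' b')
    by (apply IH; intros; apply H; simpl; auto).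
  assert (Hp := H p (or_introl eq_refl)). unfold in_SW in Hp.
  unfold SW_count in *; simpl.
  destruct (Rle_dec (fst (g p)) a); destruct (Rle_dec (snd (g p)) b);
  destruct (Rle_dec (fst p) a'); destruct (Rle_dec (snd p) b'); simpl;
  rewrite ?IH'; try reflexivity; exfalso; tauto.
Qed.

Lemma count_zero (l : list point) a b :
  (forall p, In p l -> ~ in_SW a b p) -> SW_count l a b = 0%nat.
Proof.
  induction l as [|p l IH]; intros H; [reflexivity|].
  assert (IH' : SW_count l a b = 0%nat) by (apply IH; intros; apply H; simpl; auto).
  assert (Hp := H p (or_introl eq_refl)). unfold in_SW in Hp.
  unfold SW_count in *; simpl.
  destruct (Rle_dec (fst p) a); destruct (Rle_dec (snd p) b); simpl; auto; exfalso; tauto.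
Qed.

Lemma gA_fA L p : gA L (fA L p) = p.
Proof. destruct p; unfold gA, fA; simpl; f_equal; ring. Qed.
Lemma gB_fB L p : gB L (fB L p) = p.
Proof. destruct p; unfold gB, fB; simpl; f_equal; ring. Qed.
Lemma gA_inj L p q : gA L p = gA L q -> p = q.
Proof.
  destruct p, q; unfold gA; simpl; intros H; injection H; intros; f_equal; lra.
Qed.
Lemma gB_inj L p q : gB L p = gB L q -> p = q.
Proof.
  destruct p, q; unfold gB; simpl; intros H; injection H; intros; f_equal; lra.
Qed.

Definition good_C (V : list point) (C : list (point * point)) : Prop :=
  (forall s, In s C -> In (fst s) V /\ In (snd s) V /\ fst s <> snd s) /\
  (forall s t, In s C -> In t C -> same_pair s t \/ disjoint_pairs s t).

Definition Inv (n : nat) : Prop := forall C, good_C (VV n) C ->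
  exists a b, 0 <= a <= LL n /\ 0 <= b <= LL n /\ SW_count (VV n) a b = S n /\
    forall s, In s C -> ~ (in_SW a b (fst s) /\ in_SW a b (snd s)).

Definition rb (u v : R) : bool := if Rle_dec u v then true else false.
Lemma rb_true u v : u <= v -> rb u v = true.
Proof. unfold rb; destruct (Rle_dec u v); auto; lra. Qed.
Lemma rb_true' u v : rb u v = true -> u <= v.
Proof. unfold rb; destruct (Rle_dec u v); auto; discriminate. Qed.

Definition restrict (g : point -> point) (isX : point -> bool) (C : list (point*point)) :=
  map (fun s => (g (fst s), g (snd s))) (filter (fun s => isX (fst s) && isX (snd s)) C).

Lemma restrict_good n f g (isX : point -> bool) C :
  (forall p, g (f p) = p) -> (forall p q, g p = g q -> p = q) ->
  (forall p, In p (VV (S n)) -> isX p = true -> exists q, In q (VV n) /\ p = f q) ->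
  good_C (VV (S n)) C -> good_C (VV n) (restrict g isX C).
Proof.
  intros gf ginj HX [H1 H2]. split.
  - intros s' Hs. unfold restrict in Hs. apply in_map_iff in Hs.
    destruct Hs as [s [<- Hs]]. apply filter_In in Hs. destruct Hs as [Hs Hb].
    apply andb_prop in Hb. destruct Hb as [Hb1 Hb2].
    destruct (H1 s Hs) as [Hf [Hsn Hne]].
    destruct (HX _ Hf Hb1) as [q1 [Hq1 E1]]. destruct (HX _ Hsn Hb2) as [q2 [Hq2 E2]].
    simpl. rewrite E1, E2, !gf. repeat split; auto.
    intro E; apply Hne; rewrite E1, E2, E; reflexivity.
  - intros s' t' Hs Ht. unfold restrict in Hs, Ht. apply in_map_iff in Hs, Ht.
    destruct Hs as [s [<- Hs]]. destruct Ht as [t [<- Ht]].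
    apply filter_In in Hs. apply filter_In in Ht.
    destruct (H2 s t (proj1 Hs) (proj1 Ht)) as [[[E1 E2]|[E1 E2]]|[D1 [D2 [D3 D4]]]].
    + left; left; simpl; rewrite E1, E2; auto.
    + left; right; simpl; rewrite E1, E2; auto.
    + right; unfold disjoint_pairs; simpl; repeat split; intro E; apply ginj in E; auto.
Qed.

Lemma step n : Inv n -> Inv (S n).
Proof.
  intros IH C HC. pose proof (LL_ge0 n) as HL. set (L := LL n) in *.
  pose (isA := fun p : point => rb (fst p) (L + 1) && rb (L + 2) (snd p)).
  pose (isB := fun p : point => rb (L + 2) (fst p) && rb (snd p) (L + 1)).
  assert (VS : forall p, In p (VV (S n)) ->
     p = o \/ (exists q, In q (VV n) /\ p = fA L q) \/ (exists q, In q (VV n) /\ p = fB L q)).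
  { intros p Hp. simpl in Hp. destruct Hp as [<-|Hp]; [auto|].
    apply in_app_iff in Hp; destruct Hp as [Hp|Hp]; apply in_map_iff in Hp;
    destruct Hp as [q [<- Hq]]; right; [left|right]; eauto. }
  assert (isA_fA : forall q, In q (VV n) -> isA (fA L q) = true).
  { intros q Hq. apply VV_bounds in Hq. unfold isA, fA; simpl.
    rewrite !rb_true by (fold L in Hq; lra). reflexivity. }
  assert (isB_fB : forall q, In q (VV n) -> isB (fB L q) = true).
  { intros q Hq. apply VV_bounds in Hq. unfold isB, fB; simpl.
    rewrite !rb_true by (fold L in Hq; lra). reflexivity. }
  assert (HXA : forall p, In p (VV (S n)) -> isA p = true -> exists q, In q (VV n) /\ p = fA L q).
  { intros p Hp Hb. unfold isA in Hb. apply andb_prop in Hb. destruct Hb as [b1 b2].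
    apply rb_true' in b1, b2.
    destruct (VS p Hp) as [->|[[q [Hq ->]]|[q [Hq ->]]]]; eauto.
    - simpl in b2; lra.
    - apply VV_bounds in Hq. simpl in b2. fold L in Hq. lra. }
  assert (HXB : forall p, In p (VV (S n)) -> isB p = true -> exists q, In q (VV n) /\ p = fB L q).
  { intros p Hp Hb. unfold isB in Hb. apply andb_prop in Hb. destruct Hb as [b1 b2].
    apply rb_true' in b1, b2.
    destruct (VS p Hp) as [->|[[q [Hq ->]]|[q [Hq ->]]]]; eauto.
    - simpl in b1; lra.
    - apply VV_bounds in Hq. simpl in b1. fold L in Hq. lra. }
  destruct HC as [HC1 HC2].
  destruct (classic (exists s, In s C /\ ((fst s = o /\ isA (snd s) = true) \/
                                         (snd s = o /\ isA (fst s) = true)))) as [Hex|Hnex].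
  -
    assert (Hg : good_C (VV n) (restrict (gB L) isB C))
      by (apply (restrict_good n (fB L)); [exact (gB_fB L)|exact (gB_inj L)|exact HXB|split; auto]).
    destruct (IH _ Hg) as [a' [b' [Ha [Hb [Hc Hav]]]]]. fold L in Ha, Hb.
    exists (a' + L + 2), (b' + 1). simpl LL. fold L.
    assert (Hin : forall p, In p (VV (S n)) -> in_SW (a' + L + 2) (b' + 1) p ->
               p = o \/ exists q, In q (VV n) /\ p = fB L q /\ in_SW a' b' q).
    { intros p Hp [Q1 Q2]. destruct (VS p Hp) as [->|[[q [Hq ->]]|[q [Hq ->]]]]; auto.
      - apply VV_bounds in Hq; simpl in Q2; fold L in Hq; lra.
      - right; exists q; repeat split; auto; simpl in Q1, Q2; lra. }
    split; [lra|]. split; [lra|]. split.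
    + simpl VV. fold L. rewrite count_cons_in by (unfold in_SW, o; simpl; lra).
      rewrite count_app. rewrite (count_zero (map (fA L) (VV n))).
      2:{ intros p Hp Q. apply in_map_iff in Hp. destruct Hp as [q [<- Hq]].
          apply VV_bounds in Hq. destruct Q as [_ Q2]. simpl in Q2. fold L in Hq. lra. }
      rewrite (count_map _ _ _ _ a' b'); [simpl; lia|].
      intros p Hp. apply VV_bounds in Hp. fold L in Hp. unfold in_SW, fB; simpl. lra.
    + intros s Hs [Q1 Q2].
      destruct (HC1 s Hs) as [Hf [Hsn Hne]].
      destruct Hex as [t [Ht Hto]].
      assert (Hot : forall p, (fst s = o /\ snd s = p) \/ (snd s = o /\ fst s = p) -> isA p = true).
      { intros p Hp. destruct (HC2 s t Hs Ht) as [[[E1 E2]|[E1 E2]]|D].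
        - destruct Hp as [[P1 P2]|[P1 P2]]; destruct Hto as [[T1 T2]|[T1 T2]]; subst p;
            congruence.
        - destruct Hp as [[P1 P2]|[P1 P2]]; destruct Hto as [[T1 T2]|[T1 T2]]; subst p;
            congruence.
        - unfold disjoint_pairs in D.
          destruct Hp as [[P1 P2]|[P1 P2]]; destruct Hto as [[T1 T2]|[T1 T2]]; destruct D as [D1 [D2 [D3 D4]]]; congruence. }
      destruct (Hin _ Hf Q1) as [F|[q1 [Hq1 [F Hq1Q]]]];
      destruct (Hin _ Hsn Q2) as [G|[q2 [Hq2 [G Hq2Q]]]].
      * congruence.
      * assert (isA (snd s) = true) by (apply Hot; auto).
        specialize (isB_fB _ Hq2). rewrite <- G in isB_fB.
        unfold isA, isB in *. apply andb_prop in H, isB_fB.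
        destruct H as [h1 _], isB_fB as [h2 _]. apply rb_true' in h1, h2. lra.
      * assert (isA (fst s) = true) by (apply Hot; auto).
        specialize (isB_fB _ Hq1). rewrite <- F in isB_fB.
        unfold isA, isB in *. apply andb_prop in H, isB_fB.
        destruct H as [h1 _], isB_fB as [h2 _]. apply rb_true' in h1, h2. lra.
      * apply (Hav (q1, q2)); [|split; auto].
        unfold restrict. apply in_map_iff. exists s. split.
        -- simpl. rewrite F, G, !gB_fB. reflexivity.
        -- apply filter_In. split; auto. rewrite F, G, !isB_fB; auto.
  -
    assert (Hg : good_C (VV n) (restrict (gA L) isA C))
      by (apply (restrict_good n (fA L)); [exact (gA_fA L)|exact (gA_inj L)|exact HXA|split; auto]).
    destruct (IH _ Hg) as [a' [b' [Ha [Hb [Hc Hav]]]]]. fold L in Ha, Hb.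
    exists (a' + 1), (b' + L + 2). simpl LL. fold L.
    assert (Hin : forall p, In p (VV (S n)) -> in_SW (a' + 1) (b' + L + 2) p ->
               p = o \/ exists q, In q (VV n) /\ p = fA L q /\ in_SW a' b' q).
    { intros p Hp [Q1 Q2]. destruct (VS p Hp) as [->|[[q [Hq ->]]|[q [Hq ->]]]]; auto.
      - right; exists q; repeat split; auto; simpl in Q1, Q2; lra.
      - apply VV_bounds in Hq; simpl in Q1; fold L in Hq; lra. }
    split; [lra|]. split; [lra|]. split.
    + simpl VV. fold L. rewrite count_cons_in by (unfold in_SW, o; simpl; lra).
      rewrite count_app. rewrite (count_zero (map (fB L) (VV n))).
      2:{ intros p Hp Q. apply in_map_iff in Hp. destruct Hp as [q [<- Hq]].
          apply VV_bounds in Hq. destruct Q as [Q1 _]. simpl in Q1. fold L in Hq. lra. }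
      rewrite (count_map _ _ _ _ a' b'); [simpl; lia|].
      intros p Hp. apply VV_bounds in Hp. fold L in Hp. unfold in_SW, fA; simpl. lra.
    + intros s Hs [Q1 Q2].
      destruct (HC1 s Hs) as [Hf [Hsn Hne]].
      destruct (Hin _ Hf Q1) as [F|[q1 [Hq1 [F Hq1Q]]]];
      destruct (Hin _ Hsn Q2) as [G|[q2 [Hq2 [G Hq2Q]]]].
      * congruence.
      * apply Hnex. exists s. split; auto. left. split; auto. rewrite G; auto.
      * apply Hnex. exists s. split; auto. right. split; auto. rewrite F; auto.
      * apply (Hav (q1, q2)); [|split; auto].
        unfold restrict. apply in_map_iff. exists s. split.
        -- simpl. rewrite F, G, !gA_fA. reflexivity.
        -- apply filter_In. split; auto. rewrite F, G, !isA_fA; auto.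
Qed.

Lemma inv_all n : Inv n.
Proof.
  induction n.
  - intros C [H1 _]. exists 0, 0. simpl LL. split; [lra|]. split; [lra|]. split.
    + unfold SW_count; simpl. destruct (Rle_dec 0 0); [|lra]. reflexivity.
    + intros s Hs. destruct (H1 s Hs) as [A [B N]]. simpl in A, B.
      destruct A as [A|[]]; destruct B as [B|[]]. congruence.
  - apply step; auto.
Qed.

Lemma VV_nodup n : NoDup (VV n).
Proof.
  induction n; simpl.
  - constructor; [simpl; tauto|constructor].
  - pose proof (LL_ge0 n) as HL0. constructor.
    + intro H. apply in_app_iff in H. destruct H as [H|H]; apply in_map_iff in H;
        destruct H as [q [E Hq]]; apply VV_bounds in Hq; unfold fA, fB, o in E;
        injection E; intros; lra.
    + apply NoDup_app.
      * apply NoDup_map_NoDup_ForallPairs; auto. intros x y _ _ E.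
        rewrite <- (gA_fA (LL n) x), <- (gA_fA (LL n) y), E; reflexivity.
      * apply NoDup_map_NoDup_ForallPairs; auto. intros x y _ _ E.
        rewrite <- (gB_fB (LL n) x), <- (gB_fB (LL n) y), E; reflexivity.
      * intros p H1 H2. apply in_map_iff in H1, H2.
        destruct H1 as [q1 [<- Hq1]]. destruct H2 as [q2 [E Hq2]].
        apply VV_bounds in Hq1, Hq2. unfold fA, fB in E. injection E; intros; lra.
Qed.

Theorem corollary5 : forall m : nat, (2 <= m)%nat ->
  exists V : list point, NoDup V /\
    forall C : list (point * point), disjoint_two_subsets V C ->
      exists a b : R, is_SW_hyperedge V m a b /\
        forall s, In s C -> ~ (in_SW a b (fst s) /\ in_SW a b (snd s)).
Proof.
  intros m Hm. destruct m as [|n]; [lia|].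
  exists (VV n). split; [apply VV_nodup|].
  intros C [H1 H2].
  destruct (inv_all n C) as [a [b [_ [_ [Hc Hav]]]]].
  - split; auto.
  - exists a, b. split; auto.
Qed.
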